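(* For every positive integer $n$, \[ \mathcal{A}_n(u,v;x_1,\ldots,x_n)=\frac{\det_{1\le i,j\le n}\big(x_i^{\,n-j}p_j(x_i)\big)}{\prod_{1\le i<j\le n}(x_i-x_j)},\qquad p_j(x)=\sum_{k=0}^{j-1}x^k(-1+u+v-ux)^k v^{\,j-1-k}. \]
   Context: $\mathrm{ASym}_{x_1,\ldots,x_n} f=\sum_{\sigma\in S_n}\mathrm{sgn}(\sigma) f(x_{\sigma(1)},\ldots,x_{\sigma(n)})$, and \[ \mathcal{A}_n(u,v;x_1,\ldots,x_n)=\frac{\mathrm{ASym}_{x_1,\ldots,x_n}\Big[\prod_{i=1}^n x_i^{i-1}\prod_{1\le i<j\le n}\big(v+(1-u-v)x_i+u x_i x_j\big)\Big]}{\prod_{1\le i<j\le n}(x_j-x_i)}. \] *)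

(* Defs.v *)
From HB Require Import structures.
From mathcomp Require Import all_boot all_order all_algebra all_fingroup.
Set Implicit Arguments. Unset Strict Implicit. Unset Printing Implicit Defensive.
Import Order.TTheory GRing.Theory Num.Theory.
Local Open Scope ring_scope.

(* Indices are 0-based: x : 'I_n -> R, x i corresponds to x_{i+1}. *)

Definition ASym (R : comNzRingType) (n : nat) (f : ('I_n -> R) -> R) (x : 'I_n -> R) : R :=
  \sum_(s : 'S_n) (-1) ^+ (odd_perm s) * f (fun i => x (s i)).

Definition prod_lt (R : comNzRingType) (n : nat) (F : 'I_n -> 'I_n -> R) : R :=
  \prod_(i < n) \prod_(j < n | (i < j)%N) F i j.

Definition A_summand (R : comNzRingType) (n : nat) (u v : R) (x : 'I_n -> R) : R :=
  (\prod_(i < n) x i ^+ i) *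
  prod_lt (fun i j => v + (1 - u - v) * x i + u * x i * x j).

Definition vandermonde_rev (R : comNzRingType) (n : nat) (x : 'I_n -> R) : R :=
  prod_lt (fun i j => x j - x i).

Definition cA (R : fieldType) (n : nat) (u v : R) (x : 'I_n -> R) : R :=
  ASym (A_summand u v) x / vandermonde_rev x.

(* p_j(x) = sum_{k=0}^{j-1} x^k (-1+u+v-ux)^k v^{j-1-k}, j 1-based *)
Definition p_poly (R : comNzRingType) (u v : R) (j : nat) (y : R) : R :=
  \sum_(k < j) y ^+ k * (-1 + u + v - u * y) ^+ k * v ^+ (j - 1 - k).

Definition det_matrix (R : comNzRingType) (n : nat) (u v : R) (x : 'I_n -> R) : 'M[R]_n :=
  \matrix_(i < n, j < n) (x i ^+ (n - j.+1) * p_poly u v j.+1 (x i)).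

(* Main.v *)
Require Import Defs.
From HB Require Import structures.
From mathcomp Require Import all_boot all_order all_algebra all_fingroup.
From mathcomp Require Import ring zify.
Import GRing.Theory.
Set Implicit Arguments. Unset Strict Implicit.
Local Open Scope ring_scope.

Definition hh (R : comNzRingType) (r : nat) (v t : R) : R :=
  \sum_(k < r.+1) v ^+ (r - k) * t ^+ k.

Lemma hh0 (R : comNzRingType) (v t : R) : hh 0 v t = 1.
Proof. by rewrite /hh big_ord1 !expr0 mulr1. Qed.

Lemma hhS (R : comNzRingType) r (v t : R) : hh r.+1 v t = v ^+ r.+1 + t * hh r v t.
Proof.
rewrite /hh big_ord_recl subn0 expr0 mulr1; congr (_ + _).
rewrite mulr_sumr; apply: eq_bigr => k _; rewrite lift0 subSS exprS; ring.
Qed.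

Definition Ep (R : comNzRingType) n (w : 'I_n -> R) : {poly R} :=
  \prod_(k < n) (1 - w k *: 'X).

Lemma coef_lin (R : comNzRingType) (c : R) (p : {poly R}) m :
  ((1 - c *: 'X) * p)`_m = p`_m - c * (if m is m'.+1 then p`_m' else 0).
Proof.
rewrite mulrBl mul1r coefB -scalerAl coefZ coefXM; by case: m.
Qed.

Lemma EpS (R : comNzRingType) n (w : 'I_n.+1 -> R) :
  Ep w = (1 - w ord0 *: 'X) * Ep (fun k => w (lift ord0 k)).
Proof. by rewrite /Ep big_ord_recl. Qed.

Lemma Ep_big (R : comNzRingType) n (w : 'I_n -> R) m : (n < m)%N -> (Ep w)`_m = 0.
Proof.
elim: n w m => [|n IH] w m Hm.
  by rewrite /Ep big_ord0 coef1; case: m Hm.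
rewrite EpS coef_lin; case: m Hm => [//|m] Hm.
by rewrite !IH ?mulr0 ?subr0 // ltnW.
Qed.

Lemma Ep0 (R : comNzRingType) n (w : 'I_n -> R) : (Ep w)`_0 = 1.
Proof.
elim: n w => [|n IH] w; first by rewrite /Ep big_ord0 coef1.
by rewrite EpS coef_lin IH mulr0 subr0.
Qed.

Lemma Hom (R : comNzRingType) n (w : 'I_n -> R) (a v : R) :
  \sum_(m < n.+1) (Ep w)`_m * a ^+ m * v ^+ (n - m) = \prod_(k < n) (v - a * w k).
Proof.
elim: n w => [|n IH] w.
  by rewrite big_ord1 big_ord0 Ep0 !expr0 !mulr1.
rewrite big_ord_recl -IH EpS.
set E := Ep _; set c := w ord0.
under eq_bigr do rewrite coef_lin mulrBl mulrBl.
rewrite sumrB mulrBl !mulr_sumr; congr (_ - _).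
  rewrite big_ord_recr /= Ep_big // !mul0r addr0.
  apply: eq_bigr => i _; rewrite /= subSn ?exprS; last by rewrite -ltnS.
  ring.
rewrite big_ord_recl /= mulr0 !mul0r add0r.
apply: eq_bigr => i _; rewrite /bump /= add0n add1n subSS exprS; ring.
Qed.

Lemma Phi (R : comNzRingType) n (w : 'I_n -> R) (a b v : R) :
  \prod_(k < n) (v - a * w k) =
  \sum_(m < n.+1) ((1 - b *: 'X) * Ep w)`_m * a ^+ m * hh (n - m) v (a * b).
Proof.
rewrite -Hom; set E := Ep w.
under [RHS]eq_bigr do rewrite coef_lin mulrBl mulrBl.
rewrite sumrB [X in _ = X - _]big_ord_recr [X in _ = _ - X]big_ord_recl.
rewrite [LHS]big_ord_recr /= subnn hh0 expr0 !mulr0 !mul0r add0r.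
rewrite addrAC; congr (_ + _); rewrite -sumrB; apply: eq_bigr => i _.
rewrite /bump /= add0n add1n -{2}(subnSK (ltn_ord i)) hhS (subnSK (ltn_ord i)) exprS; ring.
Qed.

Definition LF (R : comNzRingType) n (v : R) (x y : 'I_n -> R) : R :=
  (\prod_(i < n) x i ^+ i) * \prod_(i < n) \prod_(j < n | (i < j)%N) (v - x i * y j).

Lemma prod_drop0 (R : comNzRingType) n (P : pred nat) (F : 'I_n.+1 -> R) :
  \prod_(j < n.+1 | P j) F j =
  (if P 0%N then F ord0 else 1) * \prod_(j < n | P j.+1) F (lift ord0 j).
Proof.
rewrite big_mkcond big_ord_recl /= [in RHS]big_mkcond /=; congr (_ * _).
Qed.

Lemma LF_rec (R : comNzRingType) n (v : R) (x y : 'I_n.+1 -> R) :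
  LF v x y = (\prod_(k < n) (v - x ord0 * y (lift ord0 k))) *
             (\prod_(k < n) x (lift ord0 k)) *
             LF v (fun k => x (lift ord0 k)) (fun k => y (lift ord0 k)).
Proof.
rewrite /LF big_ord_recl [X in _ * X]big_ord_recl expr0 mul1r prod_drop0 /= mul1r.
have -> : \prod_(i < n) x (lift ord0 i) ^+ lift ord0 i =
   (\prod_(k < n) x (lift ord0 k)) * \prod_(i < n) x (lift ord0 i) ^+ i.
  by rewrite -big_split; apply: eq_bigr => i _; rewrite lift0 exprS.
have -> : \prod_(i < n) \prod_(j < n.+1 | (lift ord0 i < j)%N)
              (v - x (lift ord0 i) * y j) =
          \prod_(i < n) \prod_(j < n | (i < j)%N)
              (v - x (lift ord0 i) * y (lift ord0 j)).
  apply: eq_bigr => i _; rewrite prod_drop0 ltn0 mul1r.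
  by apply: eq_bigl => j; rewrite lift0 ltnS.
under eq_bigl do rewrite ltn0Sn.
rewrite /=; ring.
Qed.

Lemma sum_perm_lift (R : comNzRingType) n (G : 'S_n.+1 -> R) :
  \sum_(s : 'S_n.+1) G s =
  \sum_(j < n.+1) \sum_(t : 'S_n) G (lift_perm ord0 j t).
Proof.
rewrite (partition_big (fun s : 'S_n.+1 => s ord0) predT) //=.
apply: eq_bigr => j0 _.
rewrite (reindex (lift_perm ord0 j0)); last first.
  pose ulsf i (s : 'S_n.+1) k := odflt k (unlift (s i) (s (lift i k))).
  have ulsfK i (s : 'S_n.+1) k: lift (s i) (ulsf i s k) = s (lift i k).
    rewrite /ulsf; have:= neq_lift i k.
    by rewrite -(can_eq (permK s)) => /unlift_some[] ? ? ->.
  have inj_ulsf: injective (ulsf ord0 _).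
    move=> s; apply: can_inj (ulsf (s ord0) s^-1%g) _ => k'.
    by rewrite {1}/ulsf ulsfK !permK liftK.
  exists (fun s => perm (inj_ulsf s)) => [s _ | s].
    by apply/permP=> k'; rewrite permE /ulsf lift_perm_lift lift_perm_id liftK.
  move/(s _ =P _) => si0; apply/permP=> k.
  case: (unliftP ord0 k) => [k'|] ->; rewrite ?lift_perm_id //.
  by rewrite lift_perm_lift -si0 permE ulsfK.
by apply: eq_bigl => t; rewrite lift_perm_id eqxx.
Qed.

Lemma prod_reperm (R : comNzRingType) n (F : 'I_n -> R) (t : 'S_n) :
  \prod_(k < n) F (t k) = \prod_(k < n) F k.
Proof. by rewrite [RHS](reindex_inj (@perm_inj _ t)). Qed.

Lemma eq_LF (R : comNzRingType) n (v : R) (x y x' y' : 'I_n -> R) :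
  x =1 x' -> y =1 y' -> LF v x y = LF v x' y'.
Proof.
move=> Ex Ey; rewrite /LF; congr (_ * _).
  by apply: eq_bigr => i _; rewrite Ex.
by apply: eq_bigr => i _; apply: eq_bigr => j _; rewrite Ex Ey.
Qed.

Definition LL (R : comNzRingType) n (v : R) (x y : 'I_n -> R) : R :=
  \sum_(s : 'S_n) (-1) ^+ s * LF v (fun i => x (s i)) (fun i => y (s i)).

Lemma LL_rec (R : comNzRingType) n (v : R) (x y : 'I_n.+1 -> R) :
  LL v x y = \sum_(j < n.+1) (-1) ^+ j *
     (\prod_(k < n) (v - x j * y (lift j k))) * (\prod_(k < n) x (lift j k)) *
     LL v (fun k => x (lift j k)) (fun k => y (lift j k)).
Proof.
rewrite /LL sum_perm_lift; apply: eq_bigr => j _.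
rewrite mulr_sumr; apply: eq_bigr => t _.
rewrite LF_rec /= lift_perm_id.
under eq_bigr do rewrite lift_perm_lift.
under [X in _ * (_ * X * _)]eq_bigr do rewrite lift_perm_lift.
rewrite (@eq_LF _ _ v _ _ (fun k => x (lift j (t k))) (fun k => y (lift j (t k))));
  last by move=> k; rewrite /= lift_perm_lift.
  2: by move=> k; rewrite /= lift_perm_lift.
rewrite (prod_reperm (fun k => v - x j * y (lift j k)))
        (prod_reperm (fun k => x (lift j k))).
rewrite odd_lift_perm /= signr_addb signr_odd.
set a := (-1) ^+ j; set b := (-1) ^+ t; set P := \prod_(k < n) _; set Q := \prod_(k < n) _.
set L := LF _ _ _.
rewrite mulrCA !mulrA; do 3 congr (_ * _); by rewrite mulrC mulrA.
Qed.

Definition MM (R : comNzRingType) n (v : R) (x y : 'I_n -> R) : 'M[R]_n :=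
  \matrix_(i, j) (x i ^+ j * hh (n.-1 - j) v (x i * y i)).

Lemma cof_MM (R : comNzRingType) n (v : R) (x y : 'I_n.+1 -> R) (j : 'I_n.+1) :
  cofactor (MM v x y) j ord0 = (-1) ^+ j * (\prod_(k < n) x (lift j k)) *
     \det (MM v (fun k => x (lift j k)) (fun k => y (lift j k))).
Proof.
rewrite /cofactor addn0 -mulrA; congr (_ * _).
have -> : row' j (col' ord0 (MM v x y)) =
   diag_mx (\row_k x (lift j k)) *m MM v (fun k => x (lift j k)) (fun k => y (lift j k)).
  apply/matrixP => k l; rewrite mul_diag_mx !mxE lift0 exprS /=.
  have -> : (n - l.+1 = n.-1 - l)%N by rewrite -add1n subnDA subn1.
  by rewrite mulrA.
rewrite det_mulmx det_diag; congr (_ * _); apply: eq_bigr => k _; by rewrite mxE.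
Qed.

Lemma main_gen (R : comNzRingType) n (v : R) (x y : 'I_n -> R) :
  LL v x y = \det (MM v x y).
Proof.
elim: n x y => [|n IH] x y.
  rewrite /LL /LF /determinant; apply: eq_bigr => s _; by rewrite !big_ord0 mulr1.
rewrite LL_rec.
have E : forall j : 'I_n.+1, (-1) ^+ j *
     (\prod_(k < n) (v - x j * y (lift j k))) * (\prod_(k < n) x (lift j k)) *
     LL v (fun k => x (lift j k)) (fun k => y (lift j k)) =
   (\sum_(m < n.+1) (Ep y)`_m * MM v x y j m) * cofactor (MM v x y) j ord0.
  move=> j; rewrite cof_MM IH.
  rewrite (Phi _ _ (y j)).
  have -> : Ep y = (1 - y j *: 'X) * Ep (fun k => y (lift j k)).
    by rewrite /Ep (bigD1_ord j) //.
  set S1 := \sum_(m < n.+1) _; set S2 := \sum_(m < n.+1) _.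
  have -> : S1 = S2.
    apply: eq_bigr => m _; rewrite mxE /= mulrA //.
  set a := (-1) ^+ _; set P := \prod_(k < n) _; set D := \det _.
  by rewrite -!mulrA mulrCA.
rewrite (eq_bigr _ (fun j _ => E j)).
under eq_bigr do rewrite mulr_suml.
rewrite exchange_big /=.
under eq_bigr do (under eq_bigr do rewrite -mulrA; rewrite -mulr_sumr).
have A : forall m : 'I_n.+1, \sum_(j < n.+1) MM v x y j m * cofactor (MM v x y) j ord0
     = \det (MM v x y) *+ (ord0 == m).
  move=> m; have := congr1 (fun A : 'M[R]_n.+1 => A ord0 m) (mul_adj_mx (MM v x y)).
  rewrite !mxE => <-; apply: eq_bigr => j _; rewrite [(\adj _) _ _]mxE mulrC //.
under eq_bigr do rewrite A.
rewrite big_ord_recl /= mulr1n Ep0 mul1r big1 ?addr0 // => m _.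
by rewrite mulr0n mulr0.
Qed.


Lemma det_colperm (R : comNzRingType) n (s : 'S_n) (A : 'M[R]_n) :
  \det (col_perm s A) = (-1) ^+ s * \det A.
Proof. by rewrite col_permE det_mulmx det_perm odd_permV mulrC. Qed.

Lemma prod_lt_rev (R : comNzRingType) n (F : 'I_n -> 'I_n -> R) :
  \prod_(i < n) \prod_(j < n | (i < j)%N) F (rev_ord j) (rev_ord i) =
  \prod_(i < n) \prod_(j < n | (i < j)%N) F i j.
Proof.
rewrite [LHS](reindex_inj rev_ord_inj) /=.
under eq_bigr => i _ do rewrite (reindex_inj rev_ord_inj) /= rev_ordK.
transitivity (\prod_(i < n) \prod_(j < n | (j < i)%N) F j i).
  apply: eq_bigr => i _; apply: eq_big => j; last by rewrite rev_ordK.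
  have Hi := ltn_ord i; have Hj := ltn_ord j.
  by apply/idP/idP; lia.
rewrite (exchange_big_dep xpredT) //=.
Qed.

Lemma ASym_LL (R : fieldType) n (u v : R) (x : 'I_n -> R) :
  ASym (A_summand u v) x = LL v x (fun i => -1 + u + v - u * x i).
Proof.
rewrite /ASym /LL; apply: eq_bigr => s _; congr (_ * _).
rewrite /A_summand /LF /prod_lt; congr (_ * _).
apply: eq_bigr => i _; apply: eq_bigr => j _; ring.
Qed.

Lemma det_matrixE (R : fieldType) n (u v : R) (x : 'I_n -> R) :
  det_matrix u v x =
  col_perm (perm (@rev_ord_inj n)) (MM v x (fun i => -1 + u + v - u * x i)).
Proof.
apply/matrixP => i j; rewrite !mxE permE /=.
congr (_ * _).
have Hj := ltn_ord j.
have -> : (n.-1 - (n - j.+1) = j)%N by lia.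
rewrite /p_poly /hh subn1 /=; apply: eq_bigr => k _.
rewrite exprMn; ring.
Qed.

Lemma prod_lt_sign (R : fieldType) n (x : 'I_n -> R) :
  prod_lt (fun i j => x i - x j) =
  (-1) ^+ (perm (@rev_ord_inj n)) * vandermonde_rev x.
Proof.
have V1 := det_Vandermonde (\row_j x j).
have V2 := det_Vandermonde (\row_j x (rev_ord j)).
have E : Vandermonde n (\row_j x (rev_ord j)) =
          col_perm (perm (@rev_ord_inj n)) (Vandermonde n (\row_j x j)).
  by apply/matrixP => i j; rewrite !mxE permE.
rewrite E det_colperm V1 in V2.
have -> : vandermonde_rev x = \prod_(i < n) \prod_(j < n | (i < j)%N)
     ((\row_j0 x j0) 0 j - (\row_j0 x j0) 0 i).
  by apply: eq_bigr => i _; apply: eq_bigr => j _; rewrite !mxE.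
rewrite V2 /prod_lt -(prod_lt_rev (fun i j => x i - x j)).
by apply: eq_bigr => i _; apply: eq_bigr => j _; rewrite !mxE.
Qed.

Theorem mainTheorem4 (R : fieldType) (n : nat) (u v : R) (x : 'I_n -> R) :
  (0 < n)%N -> injective x ->
  cA u v x = \det (det_matrix u v x) / prod_lt (fun i j => x i - x j).
Proof.
move=> _ _.
rewrite /cA ASym_LL main_gen det_matrixE det_colperm prod_lt_sign.
set s := (-1) ^+ _; set D := \det _; set V := vandermonde_rev x.
have s0 : s != 0 by rewrite /s signr_eq0.
by rewrite invfM mulrACA mulfV // mul1r.
Qed.
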